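(* Let $d\in\mathbb{N}$, let $A$ be a $d\times d$ reclusive matrix and $\mathcal{P}_{A}$ its reclusive partition. Then there exists a clique in $\mathcal{P}_{A}$ of size $d+1$, i.e., $d+1$ distinct members of $\mathcal{P}_A$ that are pairwise adjacent.
   Context: A $d\times d$ matrix $A=(a_{ij})$ is reclusive if $a_{ij}=0$ for $i>j$, $a_{ii}=1$ for all $i$, and $a_{ij}>a_{ik}>0$ for all $i\le j<k$. Its reclusive partition is $\mathcal{P}_A=\{A\vec{v}+[0,1)^d:\vec{v}\in\mathbb{Z}^d\}$. Two members $X,Y$ are adjacent if $\overline{X}\cap\overline{Y}\neq\emptyset$ (closures). *)

(* Defs.v *)
From HB Require Import structures.
From mathcomp Require Import all_boot all_order all_algebra.
From mathcomp Require Import all_classical all_reals all_analysis.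
Set Implicit Arguments. Unset Strict Implicit. Unset Printing Implicit Defensive.
Import Order.TTheory GRing.Theory Num.Theory.
Import numFieldNormedType.Exports.
Local Open Scope classical_set_scope.
Local Open Scope ring_scope.

Definition reclusive (R : realType) (d : nat) (A : 'M[R]_d) : Prop :=
  (forall i j : 'I_d, (j < i)%N -> A i j = 0) /\
  (forall i : 'I_d, A i i = 1) /\
  (forall i j k : 'I_d, (i <= j)%N -> (j < k)%N -> A i j > A i k /\ A i k > 0).

Definition rtile (R : realType) (d : nat) (A : 'M[R]_d) (v : 'cV[int]_d)
  : set 'cV[R]_d :=
  [set x | exists y : 'cV[R]_d,
     (forall i : 'I_d, 0 <= y i ord0 < 1) /\
     x = A *m map_mx (fun z : int => z%:~R) v + y].

Definition rpartition (R : realType) (d : nat) (A : 'M[R]_d) : set (set 'cV[R]_d) :=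
  [set X | exists v : 'cV[int]_d, X = rtile A v].

Definition radjacent (R : realType) (d : nat) (X Y : set 'cV[R]_d) : Prop :=
  closure X `&` closure Y !=set0.

(* Main.v *)
Require Import Defs.
From HB Require Import structures.
From mathcomp Require Import all_boot all_order all_algebra.
From mathcomp Require Import all_classical all_reals all_analysis.
From mathcomp Require Import ring lra.
Import Order.TTheory GRing.Theory Num.Theory.
Import numFieldNormedType.Exports.
Local Open Scope classical_set_scope.
Local Open Scope ring_scope.

Lemma cl (R : realType) (d : nat) (A : 'M[R]_d) v (x : 'cV[R]_d) :
  (forall k, 0 <= (x - A *m map_mx (fun z : int => z%:~R) v) k ord0 <= 1) ->
  closure (rtile A v : set 'cV[R]_d) x.
Proof.
move=> hx B /nbhs_ballP [e e0 sub].
set c := A *m _ in hx *.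
pose t := Num.min (e/2) (1/2).
have e1 : 0 < e := e0.
have t0 : 0 < t by rewrite /t lt_min; apply/andP; split; lra.
have t1 : t <= 1/2 by rewrite /t ge_min; apply/orP; right; lra.
have te : t < e by rewrite /t gt_min; apply/orP; left; lra.
exists (c + (1 - t) *: (x - c)); split.
  exists ((1 - t) *: (x - c)); split => // i.
  rewrite [X in _ <= X < _]mxE; have := hx i; move: ((x - c) i ord0) => a /andP[h0 h1].
  apply/andP; split; nra.
apply: sub.
split => //= i j; rewrite ord1 {j}.
have := hx i; rewrite !mxE => /andP[h0 h1].
rewrite -ball_normE /ball_ /=.
move: (x i ord0) (\sum_(j < d) _) h0 h1 => a b h0 h1.
have -> : a - (b + (1 - t) * (a - b)) = t * (a - b) by ring.
rewrite normrM ger0_norm ?(ltW t0) // ger0_norm //.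
by apply: (le_lt_trans _ te); rewrite ler_piMr // ltW.
Qed.

Lemma tile_eq (R : realType) (d : nat) (A : 'M[R]_d) v w :
  rtile A v = rtile A w ->
  forall k, (A *m map_mx (fun z : int => z%:~R) v) k ord0 =
            (A *m map_mx (fun z : int => z%:~R) w) k ord0.
Proof.
move=> E k.
have own : forall u, rtile A u (A *m map_mx (fun z : int => z%:~R) u).
  move=> u; exists 0; split; last by rewrite addr0.
  by move=> i; rewrite mxE lexx ltr01.
have h1 := own v; have h2 := own w.
rewrite E in h1; rewrite -E in h2.
move: h1 h2; rewrite /rtile /=.
move: (A *m map_mx _ v) (A *m map_mx _ w) => cv cw.
case=> y [hy e1]; case=> y' [hy' e2].
have := hy k; have := hy' k.
move/(congr1 (fun M : 'cV[R]_d => M k ord0)): e1.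
move/(congr1 (fun M : 'cV[R]_d => M k ord0)): e2.
rewrite !mxE => ? ? /andP[? ?] /andP[? ?]; lra.
Qed.

Definition vec {d : nat} (i : 'I_d.+1) : 'cV[int]_d :=
  \col_k (if unlift ord0 i is Some j then (if k == j then 1 else 0) else 0).

Lemma col_vec (R : realType) (d : nat) (A : 'M[R]_d) (i : 'I_d.+1) (k : 'I_d) :
  (A *m map_mx (fun z : int => z%:~R) (vec i)) k ord0 =
  if unlift ord0 i is Some j then A k j else 0.
Proof.
rewrite mxE; case E: unlift => [j|].
  rewrite (bigD1 j) //= !mxE E eqxx mulr1 big1 ?addr0 // => l /negbTE hl.
  by rewrite !mxE E hl mulr0.
by rewrite big1 // => l _; rewrite !mxE E mulr0.
Qed.

Lemma ent (R : realType) (d : nat) (A : 'M[R]_d) :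
  reclusive A -> forall k j, 0 <= A k j <= 1.
Proof.
case=> [h0 [h1 h2]] k j.
case: (ltngtP k j) => hkj.
- have [H1 H2] := h2 k k j (leqnn _) hkj; rewrite h1 in H1.
  by apply/andP; split; apply: ltW.
- by rewrite h0 // lexx ler01.
- have -> : j = k by apply/val_inj.
  by rewrite h1 ler01 lexx.
Qed.

Lemma gv_bnd (R : realType) (d : nat) (A : 'M[R]_d) :
  reclusive A -> forall i k,
  0 <= (A *m map_mx (fun z : int => z%:~R) (vec i)) k ord0 <= 1.
Proof.
move=> rA i k; rewrite col_vec; case: unlift => [j|]; first exact: ent.
by rewrite lexx ler01.
Qed.

Definition mymax {R : realType} (a b : R) := if a <= b then b else a.

Theorem mainTheorem12 (R : realType) (d : nat) (A : 'M[R]_d) :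
  reclusive A ->
  exists X : 'I_d.+1 -> set 'cV[R]_d,
    (forall i, rpartition A (X i)) /\
    (forall i j, i != j -> X i <> X j) /\
    (forall i j, i != j -> radjacent (X i) (X j)).
Proof.
move=> rA.
have E : forall (x c : 'cV[R]_d) k, (x - c) k ord0 = x k ord0 - c k ord0.
  by move=> *; rewrite !mxE.
exists (fun i => rtile A (vec i)); split; [|split].
- by move=> i; exists (vec i).
- move=> i j ij eq; have := @tile_eq R d A _ _ eq => {}eq.
  have [_ [h1 h2]] := rA.
  move: ij eq; case: (unliftP ord0 i) => [a ->|->]; case: (unliftP ord0 j) => [b ->|->] ij eq.
  + have ab : a != b by apply: contra ij => /eqP ->.
    case: (ltngtP a b) => hab.
    * have := eq a; rewrite !col_vec !liftK h1 => e.
      have := h2 a a b (leqnn _) hab; rewrite h1 -e ltxx; by case.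
    * have := eq b; rewrite !col_vec !liftK h1 => e.
      have := h2 b b a (leqnn _) hab; rewrite h1 e ltxx; by case.
    * by move: ab; rewrite (val_inj hab) eqxx.
  + by have := eq a; rewrite !col_vec liftK unlift_none h1 => /eqP; rewrite oner_eq0.
  + by have := eq b; rewrite !col_vec liftK unlift_none h1 => /eqP; rewrite eq_sym oner_eq0.
  + by rewrite eqxx in ij.
- move=> i j _.
  pose p : 'cV[R]_d := \col_k mymax
     ((A *m map_mx (fun z : int => z%:~R) (vec i)) k ord0)
     ((A *m map_mx (fun z : int => z%:~R) (vec j)) k ord0).
  have key : forall a b : R, 0 <= a <= 1 -> 0 <= b <= 1 ->
      0 <= mymax a b - a <= 1 /\ 0 <= mymax a b - b <= 1.
    move=> a b /andP[? ?] /andP[? ?].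
    rewrite /mymax; case: ifP => h.
      by split; apply/andP; split; lra.
    have h' : b < a by rewrite ltNge h.
    by split; apply/andP; split; lra.
  exists p; split; apply: cl => k; rewrite E mxE;
    have [K1 K2] := key _ _ (@gv_bnd R d A rA i k) (@gv_bnd R d A rA j k); done.
Qed.
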